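(* Let \(X\) be a set with \(|X| = 2^{\aleph_{0}}\). Then there is a metric \(d^{*} \colon X^{2} \to [0,\infty)\) such that: (i) for every ultrametric \(\rho\), the mappings \(\rho\) and \(d^{*}\) are not combinatorially similar; (ii) for every \(X_1 \subseteq X\) with \(|X_1| \leqslant \aleph_{0}\), the restriction of \(d^{*}\) to \(X_1^2\) is combinatorially similar to an ultrametric.
   Context: For a mapping \(F\) with domain \(A\), \(F(A)\) denotes its range. An ultrametric on a set \(Z\) is a metric \(d\) with \(d(x,y)\le\max\{d(x,z),d(z,y)\}\) for all \(x,y,z\). For nonempty sets \(X,Y\) and mappings \(\Phi\) with domain \(X^2\), \(\Psi\) with domain \(Y^2\), \(\Phi\) is combinatorially similar to \(\Psi\) if there are bijections \(f\colon \Phi(X^2)\to\Psi(Y^2)\) and \(g\colon Y\to X\) with \(\Psi(x,y)=f(\Phi(g(x),g(y)))\) for all \(x,y\in Y\). *)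

(* Defs.v *)
From Stdlib Require Export Reals.
Open Scope R_scope.

Definition injective {A B : Type} (f : A -> B) : Prop :=
  forall a1 a2, f a1 = f a2 -> a1 = a2.
Definition surjective {A B : Type} (f : A -> B) : Prop :=
  forall b, exists a, f a = b.
Definition bijective {A B : Type} (f : A -> B) : Prop :=
  injective f /\ surjective f.

Definition has_continuum_card (X : Type) : Prop :=
  exists h : X -> R, bijective h.

Definition at_most_countable {X : Type} (A : X -> Prop) : Prop :=
  exists h : {x : X | A x} -> nat, injective h.

Definition is_metric {Z : Type} (d : Z -> Z -> R) : Prop :=
  (forall x y, 0 <= d x y) /\
  (forall x y, d x y = 0 <-> x = y) /\
  (forall x y, d x y = d y x) /\
  (forall x y z, d x y <= d x z + d z y).

Definition is_ultrametric {Z : Type} (d : Z -> Z -> R) : Prop :=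
  is_metric d /\ (forall x y z, d x y <= Rmax (d x z) (d z y)).

Definition in_range {X A : Type} (Phi : X -> X -> A) (a : A) : Prop :=
  exists x y, Phi x y = a.
Definition range2 {X A : Type} (Phi : X -> X -> A) : Type := {a : A | in_range Phi a}.
Definition range_pt {X A : Type} (Phi : X -> X -> A) (x y : X) : range2 Phi :=
  exist _ (Phi x y) (ex_intro _ x (ex_intro _ y eq_refl)).

Definition comb_similar {X Y A B : Type} (Phi : X -> X -> A) (Psi : Y -> Y -> B) : Prop :=
  exists (f : range2 Phi -> range2 Psi) (g : Y -> X),
    bijective f /\ bijective g /\
    forall x y : Y, Psi x y = proj1_sig (f (range_pt Phi (g x) (g y))).

Definition restrict2 {X A : Type} (d : X -> X -> A) (X1 : X -> Prop)
  : {x : X | X1 x} -> {x : X | X1 x} -> A :=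
  fun a b => d (proj1_sig a) (proj1_sig b).

(* Main.v *)
Require Import Defs.
From Stdlib Require Import Reals.
From Stdlib Require Import ZArith Lra Lia ClassicalEpsilon ProofIrrelevance Cantor.
Open Scope R_scope.

Definition ltk (r s : R) : Prop := Rabs r < Rabs s \/ (Rabs r = Rabs s /\ r < s).
Definition lek (r s : R) : Prop := ltk r s \/ r = s.

Lemma ltk_irrefl r : ~ ltk r r.
Proof. unfold ltk; intros [H|[_ H]]; lra. Qed.

Lemma ltk_trans r s u : ltk r s -> ltk s u -> ltk r u.
Proof. unfold ltk; intros [H|[H1 H2]] [H'|[H1' H2']]; lra. Qed.

Lemma ltk_asym r s : ltk r s -> ~ ltk s r.
Proof. intros H1 H2. exact (ltk_irrefl r (ltk_trans _ _ _ H1 H2)). Qed.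

Lemma ltk_total r s : r <> s -> ltk r s \/ ltk s r.
Proof.
  intros Hne. unfold ltk.
  destruct (Rtotal_order (Rabs r) (Rabs s)) as [H|[H|H]]; [left; now left| |right; now left].
  destruct (Rtotal_order r s) as [H'|[H'|H']]; [left; right; lra|contradiction|right; right; lra].
Qed.

Lemma lek_trans r s u : lek r s -> lek s u -> lek r u.
Proof.
  unfold lek; intros [H|H] [H'|H']; subst; auto. left; eapply ltk_trans; eauto.
Qed.

Definition M (r s : R) : R := if excluded_middle_informative (ltk r s) then s else r.

Lemma M_sym r s : M r s = M s r.
Proof.
  unfold M. destruct (excluded_middle_informative (ltk r s)) as [H|H];
  destruct (excluded_middle_informative (ltk s r)) as [H'|H']; auto.
  - destruct (ltk_asym _ _ H H').
  - destruct (Req_dec r s) as [E|E]; auto. destruct (ltk_total r s E); tauto.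
Qed.

Lemma M_ge_l p q : lek p (M p q).
Proof. unfold M, lek. destruct (excluded_middle_informative (ltk p q)); auto. Qed.

Lemma M_ge_r p q : lek q (M p q).
Proof.
  unfold M, lek. destruct (excluded_middle_informative (ltk p q)); auto.
  destruct (Req_dec q p) as [E|E]; auto. destruct (ltk_total q p E); tauto.
Qed.

Lemma M_cases p q : M p q = p \/ M p q = q.
Proof. unfold M. destruct (excluded_middle_informative (ltk p q)); auto. Qed.

Lemma M_lt p q : ltk p q -> M p q = q.
Proof. unfold M. destruct (excluded_middle_informative (ltk p q)); tauto. Qed.

Definition enc (r : R) : R := 3/2 + atan r / (2*PI).

Lemma enc_bounds r : 5/4 < enc r < 7/4.
Proof.
  unfold enc. pose proof (atan_bound r). pose proof PI_RGT_0.
  set (a := atan r) in *. set (t := a / (2*PI)).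
  assert (Ht : t * (2*PI) = a) by (unfold t; field; lra).
  split; nra.
Qed.

Lemma enc_inj r s : enc r = enc s -> r = s.
Proof.
  unfold enc. intros E. pose proof PI_RGT_0.
  assert (atan r = atan s).
  { assert (atan r / (2*PI) = atan s / (2*PI)) by lra.
    apply (f_equal (fun z => z * (2*PI))) in H0. field_simplify in H0; lra. }
  destruct (Rtotal_order r s) as [H1|[H1|H1]]; auto.
  - pose proof (atan_increasing _ _ H1); lra.
  - pose proof (atan_increasing _ _ H1); lra.
Qed.

Section D.
Variable X : Type.
Variable h : X -> R.

Definition Dm (x y : X) : R :=
  if excluded_middle_informative (x = y) then 0 else enc (M (h x) (h y)).

Lemma Dm_eq x : Dm x x = 0.
Proof. unfold Dm; destruct (excluded_middle_informative (x = x)); tauto. Qed.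

Lemma Dm_ne x y : x <> y -> Dm x y = enc (M (h x) (h y)).
Proof. unfold Dm; destruct (excluded_middle_informative (x = y)); tauto. Qed.

Lemma Dm_metric : is_metric Dm.
Proof.
  split; [|split; [|split]].
  - intros x y. destruct (excluded_middle_informative (x = y)) as [->|n].
    + rewrite Dm_eq; lra.
    + rewrite Dm_ne by auto. pose proof (enc_bounds (M (h x) (h y))); lra.
  - intros x y. split.
    + intros E. destruct (excluded_middle_informative (x = y)) as [e|n]; auto.
      rewrite Dm_ne in E by auto. pose proof (enc_bounds (M (h x) (h y))); lra.
    + intros ->. apply Dm_eq.
  - intros x y. destruct (excluded_middle_informative (x = y)) as [->|n]; auto.
    rewrite !Dm_ne by auto. now rewrite M_sym.
  - intros x y z.
    destruct (excluded_middle_informative (x = y)) as [->|n].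
    + rewrite Dm_eq.
      destruct (excluded_middle_informative (y = z)) as [->|n2].
      * rewrite Dm_eq; lra.
      * rewrite !Dm_ne by auto. pose proof (enc_bounds (M (h y) (h z))).
        pose proof (enc_bounds (M (h z) (h y))); lra.
    + rewrite (Dm_ne x y n). pose proof (enc_bounds (M (h x) (h y))).
      destruct (excluded_middle_informative (x = z)) as [<-|n2].
      * rewrite Dm_eq, (Dm_ne x y n); lra.
      * destruct (excluded_middle_informative (z = y)) as [->|n3].
        -- rewrite Dm_eq, (Dm_ne x y n); lra.
        -- rewrite !Dm_ne by auto. pose proof (enc_bounds (M (h x) (h z))).
           pose proof (enc_bounds (M (h z) (h y))); lra.
Qed.
End D.

Definition step (f : nat -> R) (n : nat) (p : R * R) : R * R :=
  let (l, r) := p in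
  if Rlt_dec (f n) ((l + r) / 2) then (l + 2 * (r - l) / 3, r) else (l, l + (r - l) / 3).

Fixpoint iv (f : nat -> R) (n : nat) : R * R :=
  match n with O => (0, 1) | S k => step f k (iv f k) end.

Lemma step_spec f n l r : l < r ->
  let p := step f n (l, r) in
  l <= fst p /\ fst p < snd p /\ snd p <= r /\ (f n < fst p \/ snd p < f n).
Proof.
  intros H. simpl. destruct (Rlt_dec (f n) ((l + r) / 2)); simpl; lra.
Qed.

Lemma iv_lt f n : fst (iv f n) < snd (iv f n).
Proof.
  induction n; simpl; [lra|]. destruct (iv f n) as [l r] eqn:E. simpl in IHn.
  pose proof (step_spec f n l r IHn); simpl in *; tauto.
Qed.

Lemma iv_mono f n m : fst (iv f n) <= fst (iv f (n + m)) /\ snd (iv f (n + m)) <= snd (iv f n).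
Proof.
  induction m.
  - rewrite Nat.add_0_r; lra.
  - rewrite Nat.add_succ_r. simpl. pose proof (iv_lt f (n + m)).
    destruct (iv f (n + m)) as [l r] eqn:E. simpl in *.
    pose proof (step_spec f (n + m) l r H); simpl in *; lra.
Qed.

Lemma iv_cross f n m : fst (iv f n) < snd (iv f m).
Proof.
  destruct (Nat.le_ge_cases n m) as [H|H].
  - replace m with (n + (m - n))%nat by lia.
    pose proof (iv_mono f n (m - n)). pose proof (iv_lt f (n + (m - n))). lra.
  - replace n with (m + (n - m))%nat by lia.
    pose proof (iv_mono f m (n - m)). pose proof (iv_lt f (m + (n - m))). lra.
Qed.

Lemma not_enum (f : nat -> R) : exists x, forall n, x <> f n.
Proof.
  set (E := fun y => exists n, y = fst (iv f n)).
  assert (Hb : bound E).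
  { exists 1. intros y [n ->]. pose proof (iv_cross f n 0). simpl in H. lra. }
  assert (He : exists y, E y) by (exists (fst (iv f 0)); exists 0%nat; auto).
  destruct (completeness E Hb He) as [x [Hub Hl]].
  exists x. intros n Hx.
  assert (H1 : fst (iv f (S n)) <= x) by (apply Hub; exists (S n); auto).
  assert (H2 : x <= snd (iv f (S n))).
  { apply Hl. intros y [k ->]. left. apply iv_cross. }
  simpl in H1, H2. pose proof (iv_lt f n). destruct (iv f n) as [l r]. simpl in *.
  pose proof (step_spec f n l r H). simpl in *. lra.
Qed.

Lemma no_inj_R_nat (q : R -> nat) : (forall a b, q a = q b -> a = b) -> False.
Proof.
  intros Hq.
  set (f := fun n => match excluded_middle_informative (exists x, q x = n) with
                     | left H => proj1_sig (constructive_indefinite_description _ H)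
                     | right _ => 0 end).
  assert (Hf : forall x, f (q x) = x).
  { intros x. unfold f. destruct (excluded_middle_informative (exists y, q y = q x)) as [H|H].
    - destruct (constructive_indefinite_description _ H) as [y Hy]. simpl. auto.
    - exfalso; eauto. }
  destruct (not_enum f) as [x Hx]. apply (Hx (q x)). now rewrite Hf.
Qed.


Lemma nat_up x : 0 <= x -> exists k : nat, x < INR k <= x + 1.
Proof.
  intros Hx. destruct (archimed x) as [H1 H2].
  assert (Hz : (0 < up x)%Z) by (apply lt_0_IZR; lra).
  exists (Z.to_nat (up x)). rewrite INR_IZR_INZ, Z2Nat.id by lia. lra.
Qed.

Lemma rat_between a b : 0 <= a -> a < b ->
  exists m n : nat, a < INR m / INR (S n) < b.
Proof.
  intros Ha Hab.
  assert (Hp : 0 <= 1 / (b - a)) by (left; apply Rdiv_lt_0_compat; lra).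
  destruct (nat_up _ Hp) as [n [Hn _]].
  set (N := INR (S n)).
  assert (HN : INR n + 1 = N) by (unfold N; rewrite S_INR; lra).
  assert (HN0 : 0 < N) by (pose proof (pos_INR n); lra).
  assert (HbN : 1 < (b - a) * N).
  { assert (1 / (b - a) * (b - a) = 1) by (field; lra). nra. }
  assert (HaN : 0 <= a * N) by nra.
  destruct (nat_up _ HaN) as [m [Hm1 Hm2]].
  exists m, n. fold N. split.
  - apply (Rmult_lt_reg_r N); auto. unfold Rdiv. rewrite Rmult_assoc, Rinv_l by lra. lra.
  - apply (Rmult_lt_reg_r N); auto. unfold Rdiv. rewrite Rmult_assoc, Rinv_l by lra. lra.
Qed.

Lemma gap_contra (a b : R -> R) :
  (forall u, 0 <= a u) -> (forall u, a u < b u) -> (forall u v, u < v -> b u < a v) -> False.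
Proof.
  intros H0 H1 H2.
  assert (Hq : forall u, {p : nat * nat | a u < INR (fst p) / INR (S (snd p)) < b u}).
  { intros u. apply constructive_indefinite_description.
    destruct (rat_between (a u) (b u) (H0 u) (H1 u)) as [m [n Hmn]]. exists (m, n). exact Hmn. }
  apply (no_inj_R_nat (fun u => to_nat (proj1_sig (Hq u)))).
  intros u v E. apply (f_equal of_nat) in E. rewrite !cancel_of_to in E.
  destruct (Hq u) as [p Hp], (Hq v) as [p' Hp']. simpl in E. subst p'.
  destruct (Rtotal_order u v) as [L|[L|L]]; auto.
  - pose proof (H2 _ _ L). lra.
  - pose proof (H2 _ _ L). lra.
Qed.

Definition ind (P : nat -> Prop) (n : nat) : R :=
  if excluded_middle_informative (P n) then 1 else 0.

Fixpoint ssum (P : nat -> Prop) (N : nat) : R :=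
  match N with O => 0 | S k => ssum P k + ind P k * (1/2)^k end.

Lemma ind_bounds P n : 0 <= ind P n <= 1.
Proof. unfold ind; destruct (excluded_middle_informative (P n)); lra. Qed.

Lemma pow_half_pos k : 0 < (1/2)^k.
Proof. apply pow_lt; lra. Qed.

Lemma ssum_bound P N : ssum P N <= 2 - 2 * (1/2)^N.
Proof.
  induction N; simpl; [lra|]. pose proof (ind_bounds P N). pose proof (pow_half_pos N). nra.
Qed.

Lemma ssum_bnd P : bound (fun y => exists N, y = ssum P N).
Proof. exists 2. intros y [N ->]. pose proof (ssum_bound P N). pose proof (pow_half_pos N). lra. Qed.

Lemma ssum_ne P : exists y, (fun y => exists N, y = ssum P N) y.
Proof. exists 0, O. reflexivity. Qed.

Definition Lsup (P : nat -> Prop) : R :=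
  proj1_sig (completeness _ (ssum_bnd P) (ssum_ne P)).

Lemma Lsup_spec P : is_lub (fun y => exists N, y = ssum P N) (Lsup P).
Proof. unfold Lsup. destruct (completeness _ (ssum_bnd P) (ssum_ne P)); auto. Qed.

Lemma Lsup_ge0 P : 0 <= Lsup P.
Proof. destruct (Lsup_spec P) as [H _]. apply H. exists O; auto. Qed.

Lemma ssum_monoN P N m : ssum P N <= ssum P (N + m).
Proof.
  induction m; [rewrite Nat.add_0_r; lra|]. rewrite Nat.add_succ_r. simpl.
  pose proof (ind_bounds P (N + m)). pose proof (pow_half_pos (N + m)). nra.
Qed.

Lemma ind_mono (P Q : nat -> Prop) n : (P n -> Q n) -> ind P n <= ind Q n.
Proof.
  intros H. unfold ind. destruct (excluded_middle_informative (P n));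
  destruct (excluded_middle_informative (Q n)); try lra. tauto.
Qed.

Lemma ssum_le (P Q : nat -> Prop) N : (forall n, P n -> Q n) -> ssum P N <= ssum Q N.
Proof.
  intros H. induction N; simpl; [lra|]. pose proof (ind_mono P Q N (H N)).
  pose proof (pow_half_pos N). nra.
Qed.

Lemma ssum_gap (P Q : nat -> Prop) k N : (forall n, P n -> Q n) -> Q k -> ~ P k ->
  (k < N)%nat -> ssum P N + (1/2)^k <= ssum Q N.
Proof.
  intros H HQ HP. induction N; intros Hk; [lia|]. simpl.
  pose proof (ind_mono P Q N (H N)). pose proof (pow_half_pos N).
  destruct (Nat.eq_dec k N) as [->|Hne].
  - pose proof (ssum_le P Q N H).
    unfold ind at 1 2. destruct (excluded_middle_informative (P N)); [tauto|].
    destruct (excluded_middle_informative (Q N)); [|tauto]. lra.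
  - assert (k < N)%nat by lia. specialize (IHN H2). nra.
Qed.

Lemma Lsup_strict (P Q : nat -> Prop) k : (forall n, P n -> Q n) -> Q k -> ~ P k ->
  Lsup P < Lsup Q.
Proof.
  intros H HQ HP.
  assert (Lsup P <= Lsup Q - (1/2)^k).
  { destruct (Lsup_spec P) as [_ Hl]. apply Hl. intros y [N ->].
    destruct (Lsup_spec Q) as [Hu _].
    pose proof (ssum_monoN P N (S k)).
    pose proof (ssum_gap P Q k (N + S k) H HQ HP ltac:(lia)).
    assert (ssum Q (N + S k) <= Lsup Q) by (apply Hu; eauto). lra. }
  pose proof (pow_half_pos k). lra.
Qed.

Lemma sig_eq {A : Type} {P : A -> Prop} (a b : {x | P x}) :
  proj1_sig a = proj1_sig b -> a = b.
Proof. destruct a, b; simpl; intros ->; f_equal; apply proof_irrelevance. Qed.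

Lemma in_range_comp {Y A B : Type} (Phi : Y -> Y -> A) (F : A -> B) v :
  in_range Phi v -> in_range (fun a b => F (Phi a b)) (F v).
Proof. intros [a [b H]]. exists a, b. now rewrite H. Qed.

Section Part2.
Variable X : Type.
Variable h : X -> R.
Hypothesis hinj : injective h.
Variable X1 : X -> Prop.
Let Y := {x : X | X1 x}.
Variable e0 : Y -> nat.
Hypothesis He0 : injective e0.

Definition hk (p : Y) : R := h (proj1_sig p).

Definition Cn (r : R) (n : nat) : Prop := exists p : Y, e0 p = n /\ ltk (hk p) r.

Definition Phi (r : R) : R := 1 + Lsup (Cn r).

Lemma Phi_ge1 r : 1 <= Phi r.
Proof. unfold Phi. pose proof (Lsup_ge0 (Cn r)). lra. Qed.

Lemma Phi_strict (p q : Y) : ltk (hk p) (hk q) -> Phi (hk p) < Phi (hk q).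
Proof.
  intros H. unfold Phi. apply Rplus_lt_compat_l.
  apply (Lsup_strict _ _ (e0 p)).
  - intros n [p' [E L]]. exists p'. split; auto. eapply ltk_trans; eauto.
  - exists p. auto.
  - intros [p' [E L]]. apply He0 in E. subst. exact (ltk_irrefl _ L).
Qed.

Lemma Phi_weak (p q : Y) : lek (hk p) (hk q) -> Phi (hk p) <= Phi (hk q).
Proof. intros [H|H]. - left; now apply Phi_strict. - rewrite H; lra. Qed.

Lemma Phi_inj (p q : Y) : Phi (hk p) = Phi (hk q) -> hk p = hk q.
Proof.
  intros E. destruct (Req_dec (hk p) (hk q)) as [|Hn]; auto.
  destruct (ltk_total _ _ Hn) as [L|L]; apply Phi_strict in L; lra.
Qed.

Definition Psi (v : R) : R :=
  match excluded_middle_informative (exists r, enc r = v) with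
  | left H => Phi (proj1_sig (constructive_indefinite_description _ H))
  | right _ => 0 end.

Lemma Psi_enc r : Psi (enc r) = Phi r.
Proof.
  unfold Psi. destruct (excluded_middle_informative (exists r0, enc r0 = enc r)) as [H|H].
  - destruct (constructive_indefinite_description _ H) as [r' Hr]. simpl.
    apply enc_inj in Hr. now subst.
  - exfalso; eauto.
Qed.

Lemma Psi_0 : Psi 0 = 0.
Proof.
  unfold Psi. destruct (excluded_middle_informative (exists r, enc r = 0)) as [H|H]; auto.
  exfalso. destruct H as [r Hr]. pose proof (enc_bounds r). lra.
Qed.

Definition Dr := restrict2 (Dm X h) X1.
Definition rho (a b : Y) : R := Psi (Dr a b).

Lemma M_key (a b : Y) : M (hk a) (hk b) = hk a \/ M (hk a) (hk b) = hk b.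
Proof. apply M_cases. Qed.

Lemma rho_eq (a : Y) : rho a a = 0.
Proof. unfold rho, Dr, restrict2. rewrite Dm_eq. apply Psi_0. Qed.

Lemma rho_ne (a b : Y) : a <> b -> rho a b = Phi (M (hk a) (hk b)).
Proof.
  intros H. unfold rho, Dr, restrict2. rewrite Dm_ne. apply Psi_enc.
  intros E. apply H. now apply sig_eq.
Qed.

Lemma Phi_M_ge1 (a b : Y) : 1 <= Phi (M (hk a) (hk b)).
Proof. apply Phi_ge1. Qed.

Lemma PhiM_l (a b : Y) : Phi (hk a) <= Phi (M (hk a) (hk b)).
Proof.
  destruct (M_key a b) as [E|E]; rewrite E; [lra|]. apply Phi_weak. rewrite <- E. apply M_ge_l.
Qed.

Lemma PhiM_r (a b : Y) : Phi (hk b) <= Phi (M (hk a) (hk b)).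
Proof.
  destruct (M_key a b) as [E|E]; rewrite E; [|lra]. apply Phi_weak. rewrite <- E. apply M_ge_r.
Qed.

Lemma rho_nonneg a b : 0 <= rho a b.
Proof.
  destruct (excluded_middle_informative (a = b)) as [->|n].
  - rewrite rho_eq; lra.
  - rewrite rho_ne by auto. pose proof (Phi_M_ge1 a b); lra.
Qed.

Lemma rho_ultra x y z : rho x y <= Rmax (rho x z) (rho z y).
Proof.
  destruct (excluded_middle_informative (x = y)) as [->|nxy].
  { rewrite rho_eq. pose proof (rho_nonneg y z). pose proof (Rmax_l (rho y z) (rho z y)). lra. }
  destruct (excluded_middle_informative (x = z)) as [<-|nxz].
  { rewrite rho_eq. apply Rmax_r. }
  destruct (excluded_middle_informative (z = y)) as [->|nzy].
  { rewrite rho_eq. apply Rmax_l. }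
  rewrite !rho_ne by auto.
  destruct (M_key x y) as [E|E]; rewrite E.
  - eapply Rle_trans; [apply PhiM_l|apply Rmax_l].
  - eapply Rle_trans; [apply PhiM_r|apply Rmax_r].
Qed.

Lemma rho_ultrametric : is_ultrametric rho.
Proof.
  assert (Hs : forall a b, rho a b = rho b a).
  { intros a b. destruct (excluded_middle_informative (a = b)) as [->|n]; auto.
    rewrite !rho_ne by auto. now rewrite M_sym. }
  split; [split; [|split; [|split]]|].
  - apply rho_nonneg.
  - intros a b. split.
    + intros E. destruct (excluded_middle_informative (a = b)) as [|n]; auto.
      rewrite rho_ne in E by auto. pose proof (Phi_M_ge1 a b); lra.
    + intros ->. apply rho_eq.
  - exact Hs.
  - intros x y z. pose proof (rho_ultra x y z). pose proof (rho_nonneg x z).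
    pose proof (rho_nonneg z y). unfold Rmax in H. destruct (Rle_dec _ _); lra.
  - apply rho_ultra.
Qed.

Lemma Psi_inj_range (a b a' b' : Y) : Psi (Dr a b) = Psi (Dr a' b') -> Dr a b = Dr a' b'.
Proof.
  intros E0. change (rho a b = rho a' b') in E0. revert E0.
  unfold Dr, restrict2.
  destruct (excluded_middle_informative (a = b)) as [->|n];
  destruct (excluded_middle_informative (a' = b')) as [->|n'].
  - rewrite !Dm_eq; auto.
  - rewrite rho_eq, rho_ne by auto. pose proof (Phi_M_ge1 a' b'); lra.
  - rewrite rho_eq, rho_ne by auto. pose proof (Phi_M_ge1 a b); lra.
  - rewrite !rho_ne by auto. intros E.
    assert (Hne : forall c d : Y, c <> d -> proj1_sig c <> proj1_sig d)
      by (intros c d H E'; apply H; now apply sig_eq).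
    rewrite !Dm_ne by auto. f_equal. fold (hk a) (hk b) (hk a') (hk b').
    destruct (M_key a b) as [E1|E1]; destruct (M_key a' b') as [E2|E2];
      rewrite E1, E2 in *; now apply Phi_inj.
Qed.

Lemma part2 : exists (Y' : Type) (rho' : Y' -> Y' -> R),
  is_ultrametric rho' /\ comb_similar (restrict2 (Dm X h) X1) rho'.
Proof.
  exists Y, rho. split; [apply rho_ultrametric|].
  set (f := fun w : range2 Dr => exist (in_range rho) (Psi (proj1_sig w))
              (in_range_comp Dr Psi _ (proj2_sig w)) : range2 rho).
  exists f, (fun y => y). split; [|split].
  - split.
    + intros [v1 H1] [v2 H2] E. apply (f_equal (@proj1_sig _ _)) in E. simpl in E.
      apply sig_eq. simpl.
      destruct H1 as [a [b <-]], H2 as [a' [b' <-]]. now apply Psi_inj_range.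
    + intros [w [a [b Hw]]]. exists (range_pt Dr a b). apply sig_eq. simpl. exact Hw.
  - split; [intros a1 a2; auto|intros b; exists b; auto].
  - intros x y. reflexivity.
Qed.
End Part2.

Lemma part1 (X : Type) (h : X -> R) (hsurj : surjective h) (Y : Type) (rho : Y -> Y -> R) :
  is_ultrametric rho -> ~ comb_similar rho (Dm X h).
Proof.
  intros [[Hnn [Hz [Hsym Htr]]] Hu] [f [g [[finj fsurj] [_ Heq]]]].
  assert (Key1 : forall x y x' y', Dm X h x y = Dm X h x' y' ->
                   rho (g x) (g y) = rho (g x') (g y')).
  { intros x y x' y' E. rewrite !Heq in E. apply sig_eq in E. apply finj in E.
    apply (f_equal (@proj1_sig _ _)) in E. exact E. }
  assert (Key2 : forall x y x' y', rho (g x) (g y) = rho (g x') (g y') ->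
                   Dm X h x y = Dm X h x' y').
  { intros x y x' y' E. rewrite !Heq. f_equal. f_equal. apply sig_eq. exact E. }
  set (xr := fun r => proj1_sig (constructive_indefinite_description _ (hsurj r))).
  assert (Hxr : forall r, h (xr r) = r).
  { intros r. unfold xr. destruct (constructive_indefinite_description _ (hsurj r)); auto. }
  assert (Hxne : forall r s, r <> s -> xr r <> xr s).
  { intros r s H E. apply H. rewrite <- (Hxr r), <- (Hxr s), E. auto. }
  set (A := fun r => rho (g (xr 0)) (g (xr r))).
  assert (HA : forall r s, r <> 0 -> ltk r s -> A r < A s).
  { intros r s Hr L.
    assert (Hs : s <> 0).
    { intros ->. unfold ltk in L. rewrite Rabs_R0 in L. pose proof (Rabs_pos r).
      destruct L as [L|[L1 L2]]; [lra|]. apply Hr. destruct (Req_dec r 0); auto.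
      pose proof (Rabs_pos_lt r H0). lra. }
    assert (L0 : forall t, t <> 0 -> ltk 0 t).
    { intros t Ht. left. rewrite Rabs_R0. now apply Rabs_pos_lt. }
    assert (Hrs : r <> s) by (intros ->; exact (ltk_irrefl _ L)).
    assert (E1 : Dm X h (xr 0) (xr s) = Dm X h (xr r) (xr s)).
    { rewrite !Dm_ne by (apply Hxne; auto). rewrite !Hxr, !M_lt; auto. }
    assert (E2 : Dm X h (xr 0) (xr r) <> Dm X h (xr 0) (xr s)).
    { rewrite !Dm_ne by (apply Hxne; auto). rewrite !Hxr, !M_lt by auto.
      intros E. apply enc_inj in E. auto. }
    apply Key1 in E1.
    assert (N : A r <> A s) by (intros E; apply E2, Key2, E).
    pose proof (Hu (g (xr 0)) (g (xr r)) (g (xr s))).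
    rewrite (Hsym (g (xr s)) (g (xr r))), <- E1 in H.
    unfold A in *. unfold Rmax in H. destruct (Rle_dec _ _); lra. }
  apply (gap_contra (fun u => A (- exp u)) (fun u => A (exp u))).
  - intros u. apply Hnn.
  - intros u. pose proof (exp_pos u). apply HA; [lra|]. right. split.
    + apply Rabs_Ropp.
    + lra.
  - intros u v L. pose proof (exp_pos u). pose proof (exp_pos v).
    pose proof (exp_increasing _ _ L). apply HA; [lra|]. left.
    rewrite Rabs_Ropp, !Rabs_right by lra. lra.
Qed.

Theorem proposition4p11 (X : Type) (HX : has_continuum_card X) :
  exists dstar : X -> X -> R,
    is_metric dstar /\
    (forall (Y : Type) (rho : Y -> Y -> R),
        is_ultrametric rho -> ~ comb_similar rho dstar) /\
    (forall X1 : X -> Prop, at_most_countable X1 ->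
        exists (Y : Type) (rho : Y -> Y -> R),
          is_ultrametric rho /\ comb_similar (restrict2 dstar X1) rho).
Proof.
  destruct HX as [h [hinj hsurj]].
  exists (Dm X h). split; [apply Dm_metric|split].
  - intros Y rho Hu. now apply part1.
  - intros X1 [e0 He0]. exact (part2 X h X1 e0 He0).
Qed.
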